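(* Let $p\ge2$ be an integer. Let $f$ be either the binary loop $C_p$ (with $n=2$) or the $n$-ary iterated group $f(x_1,\dots,x_n)=x_1+\dots+x_n$ of $\mathbb{Z}_p\times\mathbb{Z}_2$ ($n\ge2$), and for $i=1,\dots,n$ let $h_i$ be the $m_i$-ary iterated group of $D_p$, $h_i(z_1,\dots,z_{m_i})=z_1\circ\cdots\circ z_{m_i}$ ($m_i\ge1$). Then the MDS code $M=\{(x,\overline z_1,\dots,\overline z_n): x=f(h_1(\overline z_1),\dots,h_n(\overline z_n))\}\subseteq Q_{2p}^{1+m_1+\dots+m_n}$ is isotopically transitive.
   Context: Let $Q_{2p}=\{x_\zeta : x\in\mathbb{Z}_p,\ \zeta\in\{0,1\}\}$, with $0_0$ playing the role of $0$. Arithmetic on the main symbol is mod $p$, on subscripts mod $2$ ($\oplus$). The group $\mathbb{Z}_p\times\mathbb{Z}_2$: $x_\zeta+y_\xi=(x+y)_{\zeta\oplus\xi}$. The dihedral group $D_p$: $x_\zeta\circ y_\xi=((-1)^\xi x+y)_{\zeta\oplus\xi}$. The loop $C_p$: $x_\zeta\ast y_\xi=((-1)^\xi x+y+\zeta\xi)_{\zeta\oplus\xi}$. An isotopism of $Q_{2p}^N$ is a map $\overline{x}\mapsto(\tau_1x_1,\dots,\tau_Nx_N)$ with $\tau_i$ permutations of $Q_{2p}$; a set is isotopically transitive if the group of isotopisms mapping it onto itself acts transitively on it. *)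

(* Defs.v *)
From HB Require Import structures.
From mathcomp Require Import all_boot all_order all_algebra all_fingroup.
Set Implicit Arguments. Unset Strict Implicit. Unset Printing Implicit Defensive.
Import GRing.Theory.
Local Open Scope ring_scope.

(* Q_{2p} = Z_p x Z_2 : element x_zeta is (x, zeta) with zeta : bool.
   0_0 is (0, false). Requires 2 <= p for 'Z_p to be Z/pZ. *)
Definition Q (p : nat) : finType := ('Z_p * bool)%type.

Definition Qzero (p : nat) : Q p := (0, false).

Definition plusQ (p : nat) (a b : Q p) : Q p := (a.1 + b.1, a.2 (+) b.2).

Definition sgn (p : nat) (xi : bool) (x : 'Z_p) : 'Z_p := if xi then - x else x.

Definition dihQ (p : nat) (a b : Q p) : Q p := (sgn b.2 a.1 + b.1, a.2 (+) b.2).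

Definition loopQ (p : nat) (a b : Q p) : Q p :=
  (sgn b.2 a.1 + b.1 + (a.2 && b.2)%:R, a.2 (+) b.2).

Definition hD (p : nat) (s : seq (Q p)) : Q p := foldl (@dihQ p) (Qzero p) s.

Definition fsum (p n : nat) (y : 'I_n -> Q p) : Q p :=
  foldl (@plusQ p) (Qzero p) [seq y i | i <- enum 'I_n].

(* binary loop C_p applied to (y_1, y_2) (used with n = 2) *)
Definition floop (p n : nat) (y : 'I_n -> Q p) : Q p :=
  let s := [seq y i | i <- enum 'I_n] in
  loopQ (nth (Qzero p) s 0) (nth (Qzero p) s 1).

(* coordinates: None is the coordinate x; Some (i; j) is the j-th entry of z_i *)
Definition coord (n : nat) (m : 'I_n -> nat) : finType :=
  option {i : 'I_n & 'I_(m i)}.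

Definition zcoord (n : nat) (m : 'I_n -> nat) (i : 'I_n) (j : 'I_(m i)) : coord m :=
  Some (Tagged (fun k => 'I_(m k)) j).

Definition codeM (p n : nat) (m : 'I_n -> nat) (f : ('I_n -> Q p) -> Q p)
  : {set {ffun coord m -> Q p}} :=
  [set w : {ffun coord m -> Q p} |
     w None == f (fun i => hD [seq w (zcoord j) | j <- enum 'I_(m i)])].

Definition isotopism (p : nat) (T : finType) (tau : T -> {perm Q p})
  (w : {ffun T -> Q p}) : {ffun T -> Q p} := [ffun c => tau c (w c)].

Definition isotopically_transitive (p : nat) (T : finType)
  (A : {set {ffun T -> Q p}}) : Prop :=
  forall u v, u \in A -> v \in A ->
    exists tau : T -> {perm Q p},
      [set isotopism tau w | w in A] = A /\ isotopism tau u = v.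

(* Main.v *)
Require Import Defs.
From mathcomp Require Import all_boot all_order all_algebra all_fingroup.
From mathcomp Require Import ring.
From Stdlib Require Import FunctionalExtensionality.
Set Implicit Arguments. Unset Strict Implicit. Unset Printing Implicit Defensive.
Import GRing.Theory.
Local Open Scope ring_scope.

Section Alg.
Variable p : nat.
Local Notation Q := (Q p).
Local Notation "a \oD b" := (@dihQ p a b) (at level 40, left associativity).
Local Notation O := (Qzero p).

Lemma sgnK e (x : 'Z_p) : sgn e (sgn e x) = x.
Proof. by case: e => //=; rewrite opprK. Qed.

Lemma dihA (a b c : Q) : a \oD b \oD c = a \oD (b \oD c).
Proof.
case: a => a1 a2; case: b => b1 b2; case: c => c1 c2.
rewrite /dihQ /=; congr pair; last by rewrite addbA.
by case: a2; case: b2; case: c2; rewrite /sgn /=; ring.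
Qed.

Lemma dih0q (a : Q) : O \oD a = a.
Proof. by case: a => a1 a2; rewrite /dihQ /=; case: a2; rewrite /sgn /= ?oppr0 add0r. Qed.

Lemma dihq0 (a : Q) : a \oD O = a.
Proof. by case: a => a1 a2; rewrite /dihQ /= addr0 addbF. Qed.

Definition dinv (a : Q) : Q := (- sgn a.2 a.1, a.2).

Lemma dihVq (a : Q) : dinv a \oD a = O.
Proof.
case: a => a1 a2; rewrite /dihQ /dinv /Qzero /=; rewrite addbb.
by case: a2; rewrite /sgn /=; congr pair; ring.
Qed.

Lemma dihqV (a : Q) : a \oD dinv a = O.
Proof.
case: a => a1 a2; rewrite /dihQ /dinv /Qzero /=; rewrite addbb.
by case: a2; rewrite /sgn /=; congr pair; ring.
Qed.

Lemma dihKV (a b : Q) : dinv a \oD (a \oD b) = b.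
Proof. by rewrite -dihA dihVq dih0q. Qed.

Lemma dihVK (a b : Q) : a \oD (dinv a \oD b) = b.
Proof. by rewrite -dihA dihqV dih0q. Qed.

Lemma dihqK (a b : Q) : a \oD b \oD dinv b = a.
Proof. by rewrite dihA dihqV dihq0. Qed.

Definition nu (e : bool) (k : 'Z_p) (y : Q) : Q := (sgn e y.1 + y.2%:R * k, y.2).

Lemma nuM e k (a b : Q) : nu e k (a \oD b) = nu e k a \oD nu e k b.
Proof.
case: a => a1 a2; case: b => b1 b2; rewrite /nu /dihQ /=; congr pair.
by case: a2; case: b2; case: e; rewrite /sgn /=; ring.
Qed.

Lemma nu0 e k : nu e k O = O.
Proof. by rewrite /nu /Qzero /=; case: e; rewrite /sgn /= ?oppr0 mul0r addr0. Qed.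

Lemma nu_inj e k : injective (nu e k).
Proof.
case=> a1 a2 [b1 b2] h.
have h2 : a2 = b2 := congr1 snd h.
have h1 := congr1 fst h; rewrite /= h2 in h1; subst b2.
by move/GRing.addIr: h1 => /(congr1 (sgn e)); rewrite !sgnK => ->.
Qed.

Lemma foldl_dih c s : foldl (@dihQ p) c s = c \oD hD s.
Proof.
elim: s c => [|x s IH] c /=; first by rewrite /hD /= dihq0.
by rewrite /hD /= !IH dih0q dihA.
Qed.

Lemma hD_cons x s : hD (x :: s) = x \oD hD s.
Proof. by rewrite {1}/hD /= foldl_dih dih0q. Qed.

Lemma hD_rcons s x : hD (rcons s x) = hD s \oD x.
Proof. by rewrite /hD foldl_rcons. Qed.

Lemma dinv0 : dinv O = O.
Proof. by rewrite /dinv /Qzero /= oppr0. Qed.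

Definition T (A : nat -> Q) e k j x := dinv (A j) \oD nu e k x \oD A j.+1.

Lemma T_inj A e k j : injective (T A e k j).
Proof.
move=> x y; rewrite /T => h.
have := congr1 (fun z => A j \oD (z \oD dinv (A j.+1))) h.
by rewrite !dihqK !dihVK => /nu_inj.
Qed.

Lemma tele M A e k (F : 'I_M -> Q) (l : seq 'I_M) kk c :
  map val l = iota kk (size l) ->
  foldl (@dihQ p) c [seq T A e k (val j) (F j) | j <- l] =
  c \oD dinv (A kk) \oD nu e k (hD [seq F j | j <- l]) \oD A (kk + size l)%N.
Proof.
elim: l kk c => [|j l IH] kk c /=.
  by move=> _; rewrite /hD /= nu0 addn0 dihq0 dihA dihVq dihq0.
case=> hj hl; rewrite (IH kk.+1) // hD_cons nuM hj /T -addSnnS.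
by rewrite !dihA dihVK.
Qed.

Lemma tele_enum M A e k (F : 'I_M -> Q) : A 0%N = O ->
  hD [seq T A e k (val j) (F j) | j <- enum 'I_M] =
  nu e k (hD [seq F j | j <- enum 'I_M]) \oD A M.
Proof.
move=> A0; rewrite {1}/hD (@tele M A e k F (enum 'I_M) 0 O).
  by rewrite A0 dinv0 !dih0q size_enum_ord.
by rewrite val_enum_ord size_enum_ord.
Qed.

Definition pref (s : seq Q) j := hD (take j s).

Lemma T_at0 s j e k : (j < size s)%N -> T (pref s) e k j O = nth O s j.
Proof. by move=> hj; rewrite /T nu0 dihq0 /pref (take_nth O) // hD_rcons dihKV. Qed.

Lemma pref0 s : pref s 0 = O.
Proof. by rewrite /pref take0. Qed.

Lemma pref_size s : pref s (size s) = hD s.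
Proof. by rewrite /pref take_size. Qed.
End Alg.

Section Main.
Variables (p n : nat) (m : 'I_n -> nat) (f : ('I_n -> Q p) -> Q p).
Local Notation Q := (Q p).
Local Notation "a \oD b" := (@dihQ p a b) (at level 40, left associativity).
Local Notation O := (Qzero p).

Definition blk (w : {ffun Defs.coord m -> Q}) (i : 'I_n) : seq Q :=
  [seq w (zcoord j) | j <- enum 'I_(m i)].

Lemma inM w : (w \in codeM m f) = (w None == f (fun i => hD (blk w i))).
Proof. by rewrite inE. Qed.

Definition Tp (A : nat -> Q) e k j : {perm Q} := perm (@T_inj p A e k j).

Definition tauOf (u : {ffun Defs.coord m -> Q}) (e : 'I_n -> bool) (k : 'I_n -> 'Z_p)
  (G : {perm Q}) (c : Defs.coord m) : {perm Q} :=
  match c with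
  | None => G
  | Some x => Tp (pref (blk u (tag x))) (e (tag x)) (k (tag x)) (val (tagged x))
  end.

Definition zero : {ffun Defs.coord m -> Q} := [ffun _ => O].

Lemma blk_tau u e k G w i :
  hD (blk (isotopism (tauOf u e k G) w) i) =
  nu (e i) (k i) (hD (blk w i)) \oD hD (blk u i).
Proof.
rewrite /blk.
have -> : [seq isotopism (tauOf u e k G) w (zcoord j) | j <- enum 'I_(m i)] =
  [seq T (pref (blk u i)) (e i) (k i) (val j) (w (zcoord j)) | j <- enum 'I_(m i)].
  by apply: eq_map => j; rewrite /isotopism ffunE /= permE.
rewrite tele_enum ?pref0 //.
have hs : size (blk u i) = m i by rewrite /blk size_map size_enum_ord.
by rewrite -[in pref _ (m i)]hs pref_size.
Qed.

Lemma reach u e k (G : {perm Q}) :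
  f (fun _ => O) = O ->
  u \in codeM m f ->
  (forall y, G (f y) = f (fun i => nu (e i) (k i) (y i) \oD hD (blk u i))) ->
  (forall w, w \in codeM m f -> isotopism (tauOf u e k G) w \in codeM m f) /\
  isotopism (tauOf u e k G) zero = u.
Proof.
move=> f0 uM HG; split.
  move=> w; rewrite !inM => /eqP wN; apply/eqP.
  rewrite {1}/isotopism ffunE /= wN HG; congr f; apply: functional_extensionality => i.
  by rewrite blk_tau.
apply/ffunP => c; rewrite /isotopism ffunE /zero ffunE.
case: c => [[i j]|] /=.
  rewrite permE /= T_at0; last by rewrite /blk size_map size_enum_ord.
  by rewrite /blk (nth_map j) ?size_enum_ord // nth_ord_enum.
move: uM; rewrite inM => /eqP ->.
rewrite -f0 HG; congr f; apply: functional_extensionality => i.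
by rewrite nu0 dih0q.
Qed.

Lemma iso_inj (tau : Defs.coord m -> {perm Q}) : injective (isotopism tau).
Proof.
move=> w w' h; apply/ffunP => c.
by have := congr1 (fun z : {ffun Defs.coord m -> Q} => z c) h; rewrite /isotopism !ffunE => /perm_inj.
Qed.

Definition auto (tau : Defs.coord m -> {perm Q}) :=
  forall w, w \in codeM m f -> isotopism tau w \in codeM m f.

Lemma auto_onto tau : auto tau ->
  [set isotopism tau w | w in codeM m f] = codeM m f.
Proof.
move=> H; apply/eqP; rewrite eqEcard; apply/andP; split.
  by apply/subsetP => x /imsetP [w wM ->]; apply: H.
by rewrite card_imset //; apply: iso_inj.
Qed.

Lemma auto_inv tau : auto tau -> auto (fun c => ((tau c)^-1)%g).
Proof.
move=> H w wM.
have : w \in [set isotopism tau w | w in codeM m f] by rewrite auto_onto.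
case/imsetP => w' w'M ->.
suff -> : isotopism (fun c => ((tau c)^-1)%g) (isotopism tau w') = w' by [].
by apply/ffunP => c; rewrite /isotopism !ffunE permK.
Qed.

Lemma auto_comp s t : auto s -> auto t -> auto (fun c => (s c * t c)%g).
Proof.
move=> Hs Ht w wM.
suff -> : isotopism (fun c => (s c * t c)%g) w = isotopism t (isotopism s w).
  by apply/Ht/Hs.
by apply/ffunP => c; rewrite /isotopism !ffunE permM.
Qed.

Lemma generic : f (fun _ => O) = O ->
  (forall b : 'I_n -> Q, exists e k (G : {perm Q}),
     forall y, G (f y) = f (fun i => nu (e i) (k i) (y i) \oD b i)) ->
  isotopically_transitive (codeM m f).
Proof.
move=> f0 Hkey u v uM vM.
have [eu [ku [Gu HGu]]] := Hkey (fun i => hD (blk u i)).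
have [ev [kv [Gv HGv]]] := Hkey (fun i => hD (blk v i)).
have [Au Zu] := reach f0 uM HGu.
have [Av Zv] := reach f0 vM HGv.
set tu := tauOf u eu ku Gu in Au Zu.
set tv := tauOf v ev kv Gv in Av Zv.
exists (fun c => ((tu c)^-1 * tv c)%g); split.
  by apply: auto_onto; apply: auto_comp => //; apply: auto_inv.
apply/ffunP => c; rewrite /isotopism ffunE permM.
have -> : u c = tu c (zero c) by rewrite -Zu /isotopism ffunE.
by rewrite permK -Zv /isotopism ffunE.
Qed.
End Main.

Section Keys.
Variable p : nat.
Local Notation Q := (Q p).
Local Notation "a \oD b" := (@dihQ p a b) (at level 40, left associativity).
Local Notation O := (Qzero p).

Lemma plusACA (a b c d : Q) :
  plusQ (plusQ a b) (plusQ c d) = plusQ (plusQ a c) (plusQ b d).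
Proof.
rewrite /plusQ /=; congr pair; first by ring.
by case: a.2; case: b.2; case: c.2; case: d.2.
Qed.

Lemma plus00 : plusQ O O = O.
Proof. by rewrite /plusQ /Qzero /= addr0. Qed.

Lemma plus0q (a : Q) : plusQ a O = a.
Proof. by case: a => a1 a2; rewrite /plusQ /Qzero /= addr0 addbF. Qed.

Lemma foldl_plus_map (I : Type) (l : seq I) (y b : I -> Q) c d :
  foldl (@plusQ p) (plusQ c d) [seq plusQ (y i) (b i) | i <- l] =
  plusQ (foldl (@plusQ p) c (map y l)) (foldl (@plusQ p) d (map b l)).
Proof.
elim: l c d => [|i l IH] c d //=.
by rewrite plusACA IH.
Qed.

Lemma plus_inj (c : Q) : injective (fun x => plusQ x c).
Proof.
case: c => c1 c2 [x1 x2] [y1 y2] h.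
have h2 : x2 (+) c2 = y2 (+) c2 := congr1 snd h.
have h1 : x1 + c1 = y1 + c1 := congr1 fst h.
move/GRing.addIr: h1 => ->; clear h.
by move: h2; case: x2; case: y2; case: c2.
Qed.

Lemma key_sum n : forall b : 'I_n -> Q, exists e k (G : {perm Q}),
  forall y, G (fsum y) = fsum (fun i => nu (e i) (k i) (y i) \oD b i).
Proof.
move=> b; exists (fun i => (b i).2), (fun _ => 0), (perm (@plus_inj (fsum b))).
move=> y; rewrite permE.
have -> : (fun i => nu (b i).2 0 (y i) \oD b i) = (fun i => plusQ (y i) (b i)).
  apply: functional_extensionality => i; rewrite /nu /dihQ /plusQ /=.
  by rewrite mulr0 addr0 sgnK.
by rewrite /fsum -foldl_plus_map plus00.
Qed.

Lemma fsum0 n : fsum (fun _ : 'I_n => O) = O.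
Proof.
rewrite /fsum; elim: (enum 'I_n) => //= i l IH.
by rewrite plus0q.
Qed.

Lemma loop_key (b1 b2 y1 y2 : Q) :
  let K := b1.1 *+ 2 - (b1.2 (+) b2.2)%:R in
  loopQ (nu b2.2 0 y1 \oD b1) (nu (b1.2 (+) b2.2) K y2 \oD b2) =
  loopQ b1 (nu (b1.2 (+) b2.2) K (loopQ y1 y2) \oD b2).
Proof.
case: b1 => B1 e1; case: b2 => B2 e2; case: y1 => a al; case: y2 => c ga.
rewrite /loopQ /dihQ /nu /=; congr pair.
  by case: e1; case: e2; case: al; case: ga; rewrite /sgn /=; ring.
by case: e1; case: e2; case: al; case: ga.
Qed.

Lemma loop_inj (a : Q) : injective (loopQ a).
Proof.
case: a => a1 a2 [x1 x2] [y1 y2] h.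
have h2 : a2 (+) x2 = a2 (+) y2 := congr1 snd h.
have e2 : x2 = y2 by have := congr1 (addb a2) h2; rewrite !addKb.
subst y2.
have h1 := congr1 fst h; rewrite /= in h1.
move: h1 => /GRing.addIr /GRing.addrI ->. done.
Qed.
End Keys.

Section Loop.
Variable p : nat.
Local Notation Q := (Q p).
Local Notation "a \oD b" := (@dihQ p a b) (at level 40, left associativity).
Local Notation O := (Qzero p).
Let o0 : 'I_2 := ord0.
Let o1 : 'I_2 := @Ordinal 2 1 isT.

Lemma floop2 (y : 'I_2 -> Q) : floop y = loopQ (y o0) (y o1).
Proof.
rewrite /floop enum_ordSl /= enum_ordSl /=.
by congr loopQ; congr y; apply: val_inj.
Qed.

Lemma key_loop : forall b : 'I_2 -> Q, exists e k (G : {perm Q}),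
  forall y, G (floop y) = floop (fun i => nu (e i) (k i) (y i) \oD b i).
Proof.
move=> b.
pose K := (b o0).1 *+ 2 - ((b o0).2 (+) (b o1).2)%:R.
pose g2 := fun x => nu ((b o0).2 (+) (b o1).2) K x \oD b o1.
have g2i : injective g2.
  move=> x x' h; apply: (@nu_inj p ((b o0).2 (+) (b o1).2) K).
  by have := congr1 (fun z => z \oD dinv (b o1)) h; rewrite /g2 !dihqK.
have Gi : injective (fun x => loopQ (b o0) (g2 x)).
  by move=> x x' /loop_inj /g2i.
exists (fun i => if i == o0 then (b o1).2 else (b o0).2 (+) (b o1).2).
exists (fun i => if i == o0 then 0 else K).
exists (perm Gi) => y; rewrite permE !floop2 /=.
by rewrite loop_key.
Qed.

Lemma floop0 : floop (fun _ : 'I_2 => O) = O.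
Proof.
rewrite floop2 /loopQ /Qzero /=; congr pair; rewrite /sgn /=.
by rewrite !addr0.
Qed.
End Loop.

Local Close Scope ring_scope.

Theorem theorem1 (p n : nat) (m : 'I_n -> nat) (f : ('I_n -> Q p) -> Q p) :
  (2 <= p)%N ->
  ((n = 2 /\ f = @floop p n) \/ ((2 <= n)%N /\ f = @fsum p n)) ->
  (forall i, (1 <= m i)%N) ->
  isotopically_transitive (codeM m f).
Proof.
move=> _ [[hn hf] | [_ hf]] _; subst.
  exact: (generic (@floop0 p) (@key_loop p)).
exact: (generic (@fsum0 p n) (@key_sum p n)).
Qed.
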